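(* For the gossip USD, distinct opinions $i,j\in[k]$, $\varepsilon\in[0,1]$, and every $t\ge1$, writing $\delta^{(\varepsilon)}_t=\alpha_t(i)-(1+\varepsilon)\alpha_t(j)$ and $\delta_t=\delta^{(0)}_t$: (1) $\mathbb E_{t-1}[\delta^{(\varepsilon)}_t]=\delta^{(\varepsilon)}_{t-1}\big(\alpha_{t-1}(i)+\alpha_{t-1}(j)+2(1-\beta_{t-1})\big)+\varepsilon\,\alpha_{t-1}(i)\alpha_{t-1}(j)$. In particular, if $\beta_{t-1}>0$, then $\mathbb E_{t-1}[\delta_t]=\delta_{t-1}\Big(1+\alpha_{t-1}(i)+\alpha_{t-1}(j)-\frac{\gamma_{t-1}+\psi_{t-1}}{\beta_{t-1}}\Big)$. (2) $\mathrm{Var}_{t-1}[\delta_t]\ge\frac{(1-\beta_{t-1})^2}{n}\big(\alpha_{t-1}(i)+\alpha_{t-1}(j)\big)$. (3) Conditioned on $\mathcal F_{t-1}$, $\delta^{(\varepsilon)}_t-\mathbb E_{t-1}[\delta^{(\varepsilon)}_t]$ satisfies the $\big(\frac{2(1+\varepsilon)}{n},\ \frac2n(\alpha_{t-1}(i)+(1+\varepsilon)^2\alpha_{t-1}(j))\big)$-Bernstein condition.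
   Context: Vertex set $V$, $|V|=n$; opinions in $\Sigma=[k]\cup\{\bot\}$ ($\bot$ = undecided). USD update rule: $\mathsf{update}(\sigma_1,\sigma_2)=\bot$ if $\sigma_1,\sigma_2\in[k]$ and $\sigma_1\ne\sigma_2$; $=\sigma_2$ if $\sigma_1=\bot$; $=\sigma_1$ otherwise. Gossip USD: given $\mathrm{opn}_t\in\Sigma^V$, every $u\in V$ independently picks $v$ uniformly from $V$ and sets $\mathrm{opn}_{t+1}(u)=\mathsf{update}(\mathrm{opn}_t(u),\mathrm{opn}_t(v))$. Notation: $\alpha_t(i)=|\{u:\mathrm{opn}_t(u)=i\}|/n$, $\beta_t=\sum_{i\in[k]}\alpha_t(i)$, $\gamma_t=\sum_{i\in[k]}\alpha_t(i)^2$, $\psi_t=\beta_t(2\beta_t-1)-\gamma_t$. $(\mathcal F_t)$ is the natural filtration; $\mathbb E_{t-1},\mathrm{Var}_{t-1}$ are conditional on $\mathcal F_{t-1}$. Bernstein condition: for $D,s\ge0$, $X$ satisfies the $(D,s)$-Bernstein condition if $\mathbb E[e^{\lambda X}]\le\exp\!\big(\frac{\lambda^2 s/2}{1-|\lambda|D/3}\big)$ for all real $\lambda$ with $|\lambda|D<3$ (one-sided: only for $\lambda\ge0$). Conditioned on $\mathcal F_{t-1}$: the same with $\mathbb E_{t-1}$, almost surely. *)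

(* Defs.v *)
From HB Require Import structures.
From mathcomp Require Import all_boot all_order all_algebra.
From mathcomp Require Import all_classical all_reals all_analysis.
Set Implicit Arguments. Unset Strict Implicit. Unset Printing Implicit Defensive.
Import Order.TTheory GRing.Theory Num.Theory.
Local Open Scope ring_scope.

(* Opinions Sigma = [k] u {bot}: [Some a] is opinion a, [None] is undecided. *)
Definition update (k : nat) (s1 s2 : option 'I_k) : option 'I_k :=
  match s1, s2 with
  | Some a, Some b => if a == b then Some a else None
  | None, _ => s2
  | Some a, None => Some a
  end.

Definition config (V : finType) (k : nat) := {ffun V -> option 'I_k}.

(* One gossip round: g u is the vertex v sampled by u. *)
Definition step (V : finType) (k : nat) (c : config V k) (g : {ffun V -> V})
  : config V k := [ffun u => update (c u) (c (g u))].

Definition run (V : finType) (k : nat) (c0 : config V k) (hist : seq {ffun V -> V})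
  : config V k := foldl (@step V k) c0 hist.

Section Quantities.
Variables (R : realType) (V : finType) (k : nat).

Definition alpha (c : config V k) (i : 'I_k) : R :=
  #|[set u | c u == Some i]|%:R / #|V|%:R.
Definition beta (c : config V k) : R := \sum_(i < k) alpha c i.
Definition gamma (c : config V k) : R := \sum_(i < k) alpha c i ^+ 2.
Definition psi (c : config V k) : R := beta c * (2 * beta c - 1) - gamma c.

Definition deltaE (eps : R) (i j : 'I_k) (c : config V k) : R :=
  alpha c i - (1 + eps) * alpha c j.

(* Conditional expectation, given F_{t-1} with opn_{t-1} = c, of X(opn_t):
   every vertex picks v uniformly and independently, i.e. the choice function
   g is uniform on {ffun V -> V}. *)
Definition condE (c : config V k) (X : config V k -> R) : R :=
  (#|{ffun V -> V}|%:R)^-1 * \sum_(g : {ffun V -> V}) X (step c g).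

Definition condVar (c : config V k) (X : config V k -> R) : R :=
  condE c (fun c' => (X c' - condE c X) ^+ 2).

Definition condBernstein (c : config V k) (Y : config V k -> R) (D s : R) : Prop :=
  forall lam : R, `|lam| * D < 3 ->
    condE c (fun c' => expR (lam * Y c')) <=
    expR ((lam ^+ 2 * s / 2) / (1 - `|lam| * D / 3)).

End Quantities.

Arguments alpha {R V k}. Arguments beta {R V k}. Arguments gamma {R V k}.
Arguments psi {R V k}. Arguments deltaE {R V k}. Arguments condE {R V k}.
Arguments condVar {R V k}. Arguments condBernstein {R V k}.

(* Main.v *)
Require Import Defs.
From HB Require Import structures.
From mathcomp Require Import all_boot all_order all_algebra.
From mathcomp Require Import all_classical all_reals all_analysis.
From mathcomp Require Import ring lra zify.
Import Order.TTheory GRing.Theory Num.Theory.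
Local Open Scope ring_scope.

Lemma fact_ge (j : nat) : (2 * 3 ^ j <= (j.+2)`!)%N.
Proof.
elim: j => [|j IH]; first by [].
rewrite factS expnS.
apply: (@leq_trans (3 * (2 * 3 ^ j))); first by rewrite mulnCA.
by apply: leq_mul.
Qed.

Lemma geo_le (R : realFieldType) (r : R) m : 0 <= r < 1 ->
  \sum_(i < m) r ^+ i <= (1 - r)^-1.
Proof.
move=> /andP[r0 r1].
have h : 0 < 1 - r by rewrite subr_gt0.
have e : \sum_(i < m) r ^+ i = (1 - r ^+ m) / (1 - r).
  apply: (@mulIf _ (1 - r)); first by rewrite gt_eqF.
  rewrite mulfVK ?gt_eqF // mulrC.
  have := subrX1 r m. 
  move=> E; apply: (@oppr_inj _); rewrite opprB -mulNr opprB E //.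
rewrite e -[X in _ <= X]mul1r ler_pM2r ?invr_gt0 //.
rewrite lerBlDr lerDl exprn_ge0 //.
Qed.

Lemma term_le (R : realFieldType) (x : R) (i : nat) :
  x ^+ i.+2 / (i.+2)`!%:R <= x ^+ 2 / 2 * (`|x| / 3) ^+ i.
Proof.
have fpos : 0 < (i.+2)`!%:R :> R by rewrite ltr0n fact_gt0.
have h1 : x ^+ i.+2 / (i.+2)`!%:R <= `|x| ^+ i.+2 / (i.+2)`!%:R.
  by rewrite ler_pM2r ?invr_gt0 // -normrX ler_norm.
apply: (le_trans h1).
have e : `|x| ^+ i.+2 = x ^+ 2 * `|x| ^+ i.
  by rewrite -addn2 exprD mulrC real_normK ?num_real.
rewrite e expr_div_n.
have h3 : 0 < 2 * 3 ^+ i :> R by rewrite mulr_gt0 // exprn_gt0.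
have hf : 2 * 3 ^+ i <= (i.+2)`!%:R :> R.
  have := fact_ge i. rewrite -(ler_nat R) natrM natrX. by [].
apply: (@le_trans _ _ (x ^+ 2 * `|x| ^+ i / (2 * 3 ^+ i))).
  apply: ler_wpM2l; first by rewrite mulr_ge0 // ?sqr_ge0 ?exprn_ge0.
  by rewrite lef_pV2 // posrE.
rewrite invfM; rewrite le_eqVlt; apply/orP; left; apply/eqP; field.
by rewrite expf_neq0.
Qed.

Lemma expR_bern (R : realType) (x : R) : `|x| < 3 ->
  expR x <= 1 + x + x ^+ 2 / (2 * (1 - `|x| / 3)).
Proof.
move=> hx.
rewrite /expR; apply: limr_le; first exact: is_cvg_series_exp_coeff.
exists 2%N => // m /= hm.
have -> : m = (m - 2).+2 by lia.
set m' := (m - 2)%N.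
rewrite /series /= big_mkord big_ord_recl big_ord_recl /=.
rewrite /exp_coeff /= !expr0 expr1 !divr1 addrA lerD2l.
have r01 : 0 <= `|x| / 3 < 1 by apply/andP; split; [rewrite divr_ge0 | rewrite ltr_pdivrMr //; lra].
apply: (le_trans (y := \sum_(i < m') x ^+ 2 / 2 * (`|x| / 3) ^+ i)).
  apply: ler_sum => i _; exact: term_le.
rewrite -mulr_sumr invfM mulrA ler_wpM2l ?geo_le //.
by rewrite divr_ge0 // sqr_ge0.
Qed.


Section EGs.
Variables (R : realType) (V : finType).
Hypothesis hV : (0 < #|V|)%N.
Local Notation n := (#|V|%:R : R).

Definition EG (F : {ffun V -> V} -> R) : R :=
  (#|{ffun V -> V}|%:R)^-1 * \sum_g F g.

Lemma n_gt0 : 0 < n. Proof. by rewrite ltr0n. Qed.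
Lemma n_neq0 : n != 0. Proof. by rewrite gt_eqF // n_gt0. Qed.

Lemma sumr_one : \sum_(v : V) (1:R) = n.
Proof. by rewrite sumr_const. Qed.

Lemma EG_prod (f : V -> V -> R) :
  EG (fun g => \prod_u f u (g u)) = \prod_u (n^-1 * \sum_v f u v).
Proof.
rewrite /EG big_split /= -bigA_distr_bigA prodr_const card_ffun natrX exprVn.
by [].
Qed.

Lemma EG_sumr (T : finType) (F : T -> {ffun V -> V} -> R) :
  EG (fun g => \sum_x F x g) = \sum_x EG (F x).
Proof. by rewrite /EG exchange_big mulr_sumr. Qed.

Lemma EG_single (h : V -> R) u : EG (fun g => h (g u)) = n^-1 * \sum_v h v.
Proof.
pose f x v := if x == u then h v else 1.
have -> : (fun g : {ffun V -> V} => h (g u)) = fun g => \prod_x f x (g x).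
  apply: funext => g; rewrite (bigD1 u) //= /f eqxx [\prod_(_ | _) _]big1 ?mulr1 //.
  by move=> x /negbTE ->.
rewrite EG_prod (bigD1 u) //= /f eqxx [\prod_(_ | _) _]big1 ?mulr1 //.
move=> x /negbTE ->; by rewrite sumr_one mulVf ?n_neq0.
Qed.

Lemma EG_pair (a b : V -> R) u w : u != w ->
  EG (fun g => a (g u) * b (g w)) = (n^-1 * \sum_v a v) * (n^-1 * \sum_v b v).
Proof.
move=> uw.
pose f x v := if x == u then a v else if x == w then b v else 1.
have wu : (w == u) = false by rewrite eq_sym (negbTE uw).
have -> : (fun g : {ffun V -> V} => a (g u) * b (g w)) = fun g => \prod_x f x (g x).
  apply: funext => g; rewrite (bigD1 u) //= (bigD1 w) /=; last by rewrite eq_sym.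
  rewrite /f eqxx wu eqxx [\prod_(_ | _) _]big1 ?mulr1 //.
  by move=> x /andP[/negbTE -> /negbTE ->].
rewrite EG_prod (bigD1 u) //= [\prod_(_ | _) _](bigD1 w) /=; last by rewrite eq_sym.
rewrite /f eqxx wu eqxx [\prod_(_ | _) _]big1 ?mulr1 //.
move=> x /andP[/negbTE -> /negbTE ->]; by rewrite sumr_one mulVf ?n_neq0.
Qed.

Lemma EG_sum (h : V -> V -> R) :
  EG (fun g => \sum_u h u (g u)) = \sum_u n^-1 * \sum_v h u v.
Proof. rewrite EG_sumr; apply: eq_bigr => u _; exact: EG_single. Qed.

Lemma EG_sq (Y : V -> V -> R) : (forall u, \sum_v Y u v = 0) ->
  EG (fun g => (\sum_u Y u (g u)) ^+ 2) = \sum_u n^-1 * \sum_v Y u v ^+ 2.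
Proof.
move=> h0.
have -> : (fun g : {ffun V -> V} => (\sum_u Y u (g u)) ^+ 2) =
   fun g => \sum_u \sum_w Y u (g u) * Y w (g w).
  apply: funext => g; rewrite expr2 mulr_suml; apply: eq_bigr => u _.
  by rewrite mulr_sumr.
rewrite EG_sumr; apply: eq_bigr => u _.
rewrite EG_sumr (bigD1 u) //= big1 ?addr0.
  by rewrite -(EG_single (fun v => Y u v ^+ 2) u); congr EG; apply: funext => g; rewrite expr2.
move=> w wu; rewrite EG_pair; last by rewrite eq_sym.
by rewrite h0 mulr0 mul0r.
Qed.

End EGs.


Definition ind {R : realType} (b : bool) : R := (b : nat)%:R.

Lemma eqSome k (x y : 'I_k) : (Some x == Some y) = (x == y).
Proof. by []. Qed.

Section Count.
Variables (R : realType) (V : finType) (k : nat) (c : config V k) (i j : 'I_k).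
Hypotheses (hV : (0 < #|V|)%N) (hij : i != j).
Local Notation n := (#|V|%:R : R).

Lemma hji : (j == i) = false. Proof. by rewrite eq_sym (negbTE hij). Qed.

Definition Ncnt (o : option 'I_k) : R := \sum_u ind (c u == o).

Lemma ind_ge0 b : 0 <= ind b :> R. Proof. by case: b; rewrite /ind. Qed.

Lemma Ncnt_ge0 o : 0 <= Ncnt o.
Proof. by apply: sumr_ge0 => u _; apply: ind_ge0. Qed.

Lemma sum_cases (F : option 'I_k -> R) :
  (forall x, x != i -> x != j -> F (Some x) = 0) ->
  \sum_u F (c u) = Ncnt (Some i) * F (Some i) + Ncnt (Some j) * F (Some j)
                   + Ncnt None * F None.
Proof.
move=> h0; rewrite /Ncnt !mulr_suml -!big_split /=.
apply: eq_bigr => u _; case: (c u) => [x|]; rewrite /ind /=.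
  case: (eqVneq x i) => [->|xi].
    by rewrite !eqSome eqxx (negbTE hij) /=; ring.
  case: (eqVneq x j) => [->|xj] /=.
    by rewrite !eqSome eqxx hji /=; ring.
  by rewrite !eqSome (negbTE xi) (negbTE xj) h0 //=; ring.
by ring.
Qed.

Lemma card_ind (c' : config V k) l :
  #|[set u | c' u == Some l]|%:R = \sum_u ind (c' u == Some l) :> R.
Proof.
rewrite -sum1_card natr_sum big_mkcond /=; apply: eq_bigr => u _.
by rewrite inE /ind; case: (c' u == Some l).
Qed.

Lemma alphaE (c' : config V k) l :
  alpha c' l = n^-1 * \sum_u ind (c' u == Some l) :> R.
Proof. by rewrite /alpha card_ind mulrC. Qed.

Lemma Ncnt_total : Ncnt None + \sum_(l < k) Ncnt (Some l) = n.
Proof.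
rewrite /Ncnt exchange_big -big_split /= -(sumr_one R V).
apply: eq_bigr => u _; case: (c u) => [x|] /=.
  rewrite /ind /= add0r (bigD1 x) //= eqSome eqxx big1 ?addr0 //.
  by move=> l; rewrite eqSome eq_sym => /negbTE ->.
by rewrite big1 // addr0.
Qed.

Lemma alpha_c l : alpha c l = Ncnt (Some l) / n.
Proof. by rewrite alphaE mulrC. Qed.

Lemma beta_c : beta c = 1 - Ncnt None / n :> R.
Proof.
have nz := @n_neq0 R V hV.
rewrite /beta; under eq_bigr do rewrite alpha_c.
rewrite -mulr_suml; have := Ncnt_total => e.
rewrite -[X in X / n](addKr (Ncnt None)) e. by field.
Qed.

Lemma N_le : Ncnt (Some i) + Ncnt (Some j) + Ncnt None <= n.
Proof.
rewrite -Ncnt_total addrC lerD2l.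
rewrite (bigD1 i) //= (bigD1 j) /=; last by rewrite eq_sym.
rewrite addrA lerDl; apply: sumr_ge0 => l _; exact: Ncnt_ge0.
Qed.

Definition Wf (eps : R) (a b : option 'I_k) : R :=
  (ind (update a b == Some i) - (1 + eps) * ind (update a b == Some j)) / n.

Lemma upd1 (a : option 'I_k) x : update a (Some x) = Some x \/ update a (Some x) = None.
Proof. case: a => [y|] /=; last by left. by case: eqP => [->|]; [left|right]. Qed.

Lemma upd2 (a : option 'I_k) x : update (Some x) a = Some x \/ update (Some x) a = None.
Proof. case: a => [y|] /=; last by left. by case: eqP => [->|]; [left|right]. Qed.

Lemma W_zero eps o x : x != i -> x != j -> (o = Some x \/ o = None) ->
  (ind (o == Some i) - (1 + eps) * ind (o == Some j)) / n = 0.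
Proof.
move=> xi xj [->|->]; rewrite /ind /=; last by ring.
by rewrite !eqSome (negbTE xi) (negbTE xj) /=; ring.
Qed.

Lemma W_other1 eps a x : x != i -> x != j -> Wf eps a (Some x) = 0.
Proof. by move=> xi xj; apply: W_zero xi xj (upd1 a x). Qed.

Lemma W_other2 eps a x : x != i -> x != j -> Wf eps (Some x) a = 0.
Proof. by move=> xi xj; apply: W_zero xi xj (upd2 a x). Qed.

End Count.


Arguments EG {R V}.

Section Parts.
Variables (R : realType) (V : finType) (k : nat) (c : config V k) (i j : 'I_k).
Hypotheses (hV : (0 < #|V|)%N) (hij : i != j).
Local Notation n := (#|V|%:R : R).
Local Notation W := (@Wf R V k i j).
Local Notation Ni := (@Ncnt R V k c (Some i)).
Local Notation Nj := (@Ncnt R V k c (Some j)).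
Local Notation Nb := (@Ncnt R V k c None).

Lemma nz : n != 0. Proof. exact: (@n_neq0 R V hV). Qed.

Lemma deltaE_step eps g :
  deltaE eps i j (step c g) = \sum_u W eps (c u) (c (g u)).
Proof.
have e : forall u, step c g u = update (c u) (c (g u)) by move=> u; rewrite ffunE.
rewrite /deltaE !alphaE /W -mulr_suml sumrB -mulr_sumr.
under eq_bigr do rewrite e.
under [\sum_u ind (step c g u == Some j)]eq_bigr do rewrite e.
by ring.
Qed.

Lemma condE_EG (X : config V k -> R) : condE c X = EG (fun g => X (step c g)).
Proof. by []. Qed.

Lemma mean_eq eps :
  condE c (deltaE eps i j) = \sum_u n^-1 * \sum_v W eps (c u) (c v).
Proof.
rewrite condE_EG.
have -> : (fun g => deltaE eps i j (step c g)) = fun g => \sum_u W eps (c u) (c (g u)).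
  by apply: funext => g; rewrite deltaE_step.
by rewrite (@EG_sum R V hV (fun u v => W eps (c u) (c v))).
Qed.

Lemma sumW eps a : \sum_v W eps a (c v) =
  Ni * W eps a (Some i) + Nj * W eps a (Some j) + Nb * W eps a None.
Proof. apply: (@sum_cases R V k c i j hij (fun b => W eps a b)) => x; exact: W_other1. Qed.

Lemma hji' : (j == i) = false. Proof. exact: hji hij. Qed.

Ltac wcomp := rewrite /Wf /update /= ?eqxx ?(negbTE hij) ?hji' ?eqSome ?eqxx ?(negbTE hij) ?hji' /ind /=; field; exact: nz.

Lemma W_ii eps : W eps (Some i) (Some i) = n^-1. Proof. wcomp. Qed.
Lemma W_ij eps : W eps (Some i) (Some j) = 0. Proof. wcomp. Qed.
Lemma W_ib eps : W eps (Some i) None = n^-1. Proof. wcomp. Qed.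
Lemma W_ji eps : W eps (Some j) (Some i) = 0. Proof. wcomp. Qed.
Lemma W_jj eps : W eps (Some j) (Some j) = - (1 + eps) / n. Proof. wcomp. Qed.
Lemma W_jb eps : W eps (Some j) None = - (1 + eps) / n. Proof. wcomp. Qed.
Lemma W_bi eps : W eps None (Some i) = n^-1. Proof. wcomp. Qed.
Lemma W_bj eps : W eps None (Some j) = - (1 + eps) / n. Proof. wcomp. Qed.
Lemma W_bb eps : W eps None None = 0. Proof. wcomp. Qed.

End Parts.


Lemma ineq2 (R : realFieldType) (nn Ni Nj Nb : R) : 0 < nn -> 0 <= Ni -> 0 <= Nj -> 0 <= Nb ->
  Ni + Nj + Nb <= nn ->
  (1 - (1 - Nb / nn)) ^+ 2 / nn * (Ni / nn + Nj / nn) <=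
  Ni *
  (nn^-1 * (Ni * nn^-1 ^+ 2 + Nj * 0 ^+ 2 + Nb * nn^-1 ^+ 2) -
   (nn^-1 * (Ni / nn + Nj * 0 + Nb / nn)) ^+ 2) +
  Nj *
  (nn^-1 *
   (Ni * 0 ^+ 2 + Nj * (- (1 + 0) / nn) ^+ 2 +
    Nb * (- (1 + 0) / nn) ^+ 2) -
   (nn^-1 *
    (Ni * 0 + Nj * (- (1 + 0) / nn) + Nb * (- (1 + 0) / nn)))
   ^+ 2) +
  Nb *
  (nn^-1 *
   (Ni * nn^-1 ^+ 2 + Nj * (- (1 + 0) / nn) ^+ 2 + Nb * 0 ^+ 2) -
   (nn^-1 * (Ni / nn + Nj * (- (1 + 0) / nn) + Nb * 0)) ^+ 2).
Proof.
move=> hn hp hq hb hs.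
rewrite -subr_ge0.
set P := Ni ^+ 2 * (nn - Ni - Nb) + Nj ^+ 2 * (nn - Nj - Nb)
         + 2 * Nb * (Ni + Nj) * (nn - Nb - Ni - Nj) + 6 * Nb * Ni * Nj.
have hP : 0 <= P.
  rewrite /P; apply: addr_ge0; [apply: addr_ge0; [apply: addr_ge0|]|].
  - apply: mulr_ge0; [exact: sqr_ge0|lra].
  - apply: mulr_ge0; [exact: sqr_ge0|lra].
  - apply: mulr_ge0; [apply: mulr_ge0; [apply: mulr_ge0|]|]; lra.
  - apply: mulr_ge0; [apply: mulr_ge0; [apply: mulr_ge0|]|]; lra.
have nz : nn != 0 by rewrite gt_eqF.
set G := (X in 0 <= X).
have -> : G = P / nn ^+ 4 by rewrite /G /P; field.
by rewrite divr_ge0 // exprn_ge0 // ltW.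
Qed.

Section Parts2.
Variables (R : realType) (V : finType) (k : nat) (c : config V k) (i j : 'I_k).
Hypotheses (hV : (0 < #|V|)%N) (hij : i != j).
Local Notation n := (#|V|%:R : R).
Local Notation W := (@Wf R V k i j).
Local Notation Ni := (@Ncnt R V k c (Some i)).
Local Notation Nj := (@Ncnt R V k c (Some j)).
Local Notation Nb := (@Ncnt R V k c None).

Lemma part1 (eps : R) : condE c (deltaE eps i j) =
  deltaE eps i j c * (alpha c i + alpha c j + 2 * (1 - beta c))
  + eps * alpha c i * alpha c j.
Proof.
have nz := @nz R V hV.
rewrite (@mean_eq R V k c i j hV).
under eq_bigr do rewrite (@sumW R V k c i j hij).
rewrite (@sum_cases R V k c i j hij (fun a => n^-1 * (Ni * W eps a (Some i) + Nj * W eps a (Some j) + Nb * W eps a None))); last first.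
  by move=> x xi xj; rewrite !W_other2 //; ring.
rewrite W_ii // W_ij // W_ib // W_ji // W_jj //.
rewrite W_jb // W_bi // W_bj // W_bb //.
rewrite /deltaE !(@alpha_c R V k c) (@beta_c R V k c hV).
by field.
Qed.

Lemma part1b : 0 < beta (R:=R) c ->
  condE c (deltaE (0 : R) i j) =
  deltaE (0 : R) i j c * (1 + alpha c i + alpha c j - (gamma c + psi c) / beta c).
Proof.
move=> hb; rewrite part1.
have e : (gamma c + psi c) / beta c = 2 * beta (R:=R) c - 1.
  rewrite /psi addrC subrK; field; by rewrite gt_eqF.
rewrite e; ring.
Qed.

Lemma var_id (f : V -> R) :
  n^-1 * \sum_v (f v - n^-1 * \sum_w f w) ^+ 2 =
  n^-1 * \sum_v f v ^+ 2 - (n^-1 * \sum_w f w) ^+ 2.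
Proof.
have nz := @nz R V hV.
set m := n^-1 * \sum_w f w.
have hs : \sum_w f w = n * m by rewrite /m mulrA mulfV // mul1r.
have -> : \sum_v (f v - m) ^+ 2 = \sum_v (f v ^+ 2 + (- (2 * m)) * f v + m ^+ 2).
  by apply: eq_bigr => v _; ring.
rewrite !big_split /= -mulr_sumr hs sumr_const.
rewrite -[m ^+ 2 *+ #|V|]mulr_natl.
by field.
Qed.

Lemma sumW2 (eps : R) a : \sum_v W eps a (c v) ^+ 2 =
  Ni * W eps a (Some i) ^+ 2 + Nj * W eps a (Some j) ^+ 2 + Nb * W eps a None ^+ 2.
Proof.
apply: (@sum_cases R V k c i j hij (fun b => W eps a b ^+ 2)) => x xi xj.
by rewrite W_other1 // expr2 mul0r.
Qed.

Lemma part2 :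
  condVar c (deltaE (0 : R) i j) >=
        (1 - beta (R:=R) c) ^+ 2 / n * (alpha c i + alpha c j).
Proof.
have nz := @nz R V hV.
rewrite /condVar condE_EG (@mean_eq R V k c i j hV).
set M := fun u => n^-1 * \sum_v W 0 (c u) (c v).
pose Y u v := W 0 (c u) (c v) - M u.
have -> : (fun g => (deltaE 0 i j (step c g) - \sum_u M u) ^+ 2) =
          fun g => (\sum_u Y u (g u)) ^+ 2.
  apply: funext => g; rewrite (@deltaE_step R V k c i j) -sumrB //.
rewrite (@EG_sq R V hV Y); last first.
  move=> u; rewrite /Y sumrB sumr_const -mulr_natl /M; by field.
rewrite /Y /M.
under eq_bigr => u _ do rewrite (var_id (fun v => W 0 (c u) (c v))).
under eq_bigr => u _ do rewrite (sumW2 0 (c u)) (@sumW R V k c i j hij 0 (c u)).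
rewrite (@sum_cases R V k c i j hij (fun a => n^-1 * (Ni * W 0 a (Some i) ^+ 2 + Nj * W 0 a (Some j) ^+ 2 + Nb * W 0 a None ^+ 2) - (n^-1 * (Ni * W 0 a (Some i) + Nj * W 0 a (Some j) + Nb * W 0 a None)) ^+ 2)); last first.
  by move=> x xi xj; rewrite !W_other2 //; ring.
rewrite W_ii // W_ij // W_ib // W_ji // W_jj //.
rewrite W_jb // W_bi // W_bj // W_bb //.
rewrite !(@alpha_c R V k c) (@beta_c R V k c hV).
apply: ineq2.
- exact: n_gt0.
- exact: Ncnt_ge0.
- exact: Ncnt_ge0.
- exact: Ncnt_ge0.
- exact: N_le.
Qed.

End Parts2.


Section SB.
Variables (R : realType) (V : finType).
Hypotheses (hV : (0 < #|V|)%N).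
Local Notation n := (#|V|%:R : R).

Lemma sb (w : V -> R) (D lam : R) : \sum_v w v = 0 -> (forall v, `|w v| <= D) ->
  `|lam| * D < 3 ->
  n^-1 * \sum_v expR (lam * w v) <=
  expR (lam ^+ 2 * (n^-1 * \sum_v w v ^+ 2) / 2 / (1 - `|lam| * D / 3)).
Proof.
move=> h0 hw hl.
have nz := @n_neq0 R V hV.
have npos := @n_gt0 R V hV.
set a := `|lam| * D in hl *.
have hd : 0 < 1 - a / 3 by lra.
have st v : expR (lam * w v) <= 1 + lam * w v + (lam ^+ 2 / (2 * (1 - a / 3))) * w v ^+ 2.
  have hx : `|lam * w v| <= a by rewrite normrM ler_wpM2l.
  apply: le_trans; first by apply: expR_bern; lra.
  rewrite lerD2l exprMn mulrAC ler_wpM2r ?sqr_ge0 // ler_wpM2l ?sqr_ge0 //.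
  rewrite lef_pV2 ?posrE; lra.
apply: le_trans; first by apply: ler_wpM2l; [rewrite invr_ge0 ltW // | apply: ler_sum => v _; exact: st].
rewrite !big_split /= (@sumr_one R V) -!mulr_sumr h0.
apply: le_trans; last by apply: expR_ge1Dx.
rewrite le_eqVlt; apply/orP; left; apply/eqP.
field; rewrite nz andbT; apply/eqP; lra.
Qed.

End SB.

Section Parts3.
Variables (R : realType) (V : finType) (k : nat) (c : config V k) (i j : 'I_k).
Hypotheses (hV : (0 < #|V|)%N) (hij : i != j).
Local Notation n := (#|V|%:R : R).
Local Notation W := (@Wf R V k i j).
Local Notation Ni := (@Ncnt R V k c (Some i)).
Local Notation Nj := (@Ncnt R V k c (Some j)).
Local Notation Nb := (@Ncnt R V k c None).

Lemma sum_cst (x : R) : \sum_(v : V) x = n * x.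
Proof. by rewrite sumr_const mulr_natl. Qed.

Lemma avg_bounds (f : V -> R) lo hi : (forall v, lo <= f v <= hi) ->
  forall v, `|f v - n^-1 * \sum_w f w| <= hi - lo.
Proof.
move=> hf v.
have nz := @n_neq0 R V hV.
have npos := @n_gt0 R V hV.
have hlo : lo <= n^-1 * \sum_w f w.
  have : n^-1 * (n * lo) <= n^-1 * \sum_w f w.
    rewrite -sum_cst ler_pM2l ?invr_gt0 //.
    by apply: ler_sum => w _; case/andP: (hf w).
  by rewrite mulKf.
have hhi : n^-1 * \sum_w f w <= hi.
  have : n^-1 * \sum_w f w <= n^-1 * (n * hi).
    rewrite -sum_cst ler_pM2l ?invr_gt0 //.
    by apply: ler_sum => w _; case/andP: (hf w).
  by rewrite mulKf.
case/andP: (hf v) => h1 h2.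
rewrite ler_norml; apply/andP; split; lra.
Qed.

Lemma W_bounds (eps : R) a b : 0 <= eps -> -(1+eps)/n <= W eps a b <= 1/n.
Proof.
move=> he; rewrite /Wf.
have ht : -(1+eps) <= ind (update a b == Some i) - (1+eps) * ind (update a b == Some j) <= 1.
  case: (update a b) => [x|]; rewrite /ind /= ?eqSome; last by apply/andP; split; lra.
  case: (eqVneq x i) => [->|xi] /=; first by rewrite (negbTE hij) /=; apply/andP; split; lra.
  by case: (x == j) => /=; apply/andP; split; lra.
have ninv : 0 <= n^-1 by rewrite invr_ge0 ler0n.
move/andP: ht => [h1 h2]; apply/andP; split; by rewrite ler_wpM2r.
Qed.

Lemma sbound (eps : R) : 0 <= eps ->
  \sum_u n^-1 * \sum_v W eps (c u) (c v) ^+ 2 <=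
  2 / n * (alpha c i + (1 + eps) ^+ 2 * alpha c j).
Proof.
move=> he.
have nz := @n_neq0 R V hV.
have npos := @n_gt0 R V hV.
under eq_bigr => u _ do rewrite (@sumW2 R V k c i j hij eps (c u)).
rewrite (@sum_cases R V k c i j hij (fun a => n^-1 * (Ni * W eps a (Some i) ^+ 2 + Nj * W eps a (Some j) ^+ 2 + Nb * W eps a None ^+ 2))); last first.
  by move=> x xi xj; rewrite !W_other2 //; ring.
rewrite W_ii // W_ij // W_ib // W_ji // W_jj //.
rewrite W_jb // W_bi // W_bj // W_bb //.
rewrite !(@alpha_c R V k c).
rewrite -subr_ge0.
set G := (X in 0 <= X).
have hle := @N_le R V k c i j hij.
have h1 := @Ncnt_ge0 R V k c (Some i).
have h2 := @Ncnt_ge0 R V k c (Some j).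
have h3 := @Ncnt_ge0 R V k c None.
have -> : G = (Ni * (2 * n - Ni - 2 * Nb) + (1 + eps) ^+ 2 * Nj * (2 * n - Nj - 2 * Nb)) / n ^+ 3.
  by rewrite /G; field.
apply: divr_ge0; last by rewrite exprn_ge0 // ltW.
apply: addr_ge0; apply: mulr_ge0; rewrite ?mulr_ge0 ?sqr_ge0 //; lra.
Qed.

End Parts3.


Section Parts4.
Variables (R : realType) (V : finType) (k : nat) (c : config V k) (i j : 'I_k).
Hypotheses (hV : (0 < #|V|)%N) (hij : i != j).
Local Notation n := (#|V|%:R : R).
Local Notation W := (@Wf R V k i j).

Lemma part3 (eps : R) : 0 <= eps <= 1 ->
  condBernstein c (fun c' => deltaE eps i j c' - condE c (deltaE eps i j))
    (2 * (1 + eps) / n) (2 / n * (alpha c i + (1 + eps) ^+ 2 * alpha c j)).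
Proof.
move=> /andP[he0 he1] lam hl.
have nz := @n_neq0 R V hV.
have npos := @n_gt0 R V hV.
rewrite condE_EG (@mean_eq R V k c i j hV).
set M := fun u => n^-1 * \sum_v W eps (c u) (c v).
pose Y u v := W eps (c u) (c v) - M u.
have -> : (fun g => expR (lam * (deltaE eps i j (step c g) - \sum_u M u))) =
          fun g => \prod_u expR (lam * Y u (g u)).
  apply: funext => g; rewrite (@deltaE_step R V k c i j) -sumrB mulr_sumr expR_sum //.
rewrite (@EG_prod R V (fun u v => expR (lam * Y u v))).
set X := `|lam| * (2 * (1 + eps) / n) in hl *.
set d := 1 - X / 3.
have hd : 0 < d by rewrite /d; lra.
apply: (le_trans (y := \prod_u expR (lam ^+ 2 * (n^-1 * \sum_v Y u v ^+ 2) / 2 / d))).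
  apply: ler_prod => u _; apply/andP; split.
    rewrite mulr_ge0 ?invr_ge0 ?ler0n //; apply: sumr_ge0 => v _; exact: expR_ge0.
  apply: (@sb R V hV (Y u) (2 * (1 + eps) / n) lam) => //.
    by rewrite /Y sumrB (@sum_cst R V) /M; field.
  move=> v; rewrite /Y /M.
  apply: le_trans.
    apply: (@avg_bounds R V hV (fun v => W eps (c u) (c v)) (-(1+eps)/n) (1/n)).
    by move=> w; apply: W_bounds.
  rewrite -subr_ge0.
  have -> : 2 * (1 + eps) / n - (1 / n - - (1 + eps) / n) = eps / n by field.
  by rewrite divr_ge0 // ltW.
rewrite -expR_sum ler_expR.
have -> : \sum_u lam ^+ 2 * (n^-1 * \sum_v Y u v ^+ 2) / 2 / d =
          (\sum_u n^-1 * \sum_v Y u v ^+ 2) * (lam ^+ 2 / 2 / d).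
  by rewrite mulr_suml; apply: eq_bigr => u _; ring.
have -> : lam ^+ 2 * (2 / n * (alpha c i + (1 + eps) ^+ 2 * alpha c j)) / 2 / d =
          (2 / n * (alpha c i + (1 + eps) ^+ 2 * alpha c j)) * (lam ^+ 2 / 2 / d) by ring.
apply: ler_wpM2r.
  by apply: divr_ge0; [apply: divr_ge0; [exact: sqr_ge0|] | exact: ltW].
apply: le_trans; last exact: (@sbound R V k c i j hV hij eps he0).
apply: ler_sum => u _.
rewrite /Y /M (@var_id R V hV (fun v => W eps (c u) (c v))).
by rewrite lerBlDr lerDl sqr_ge0.
Qed.

End Parts4.

Theorem mainTheorem6 (R : realType) (V : finType) (k : nat) (i j : 'I_k)
    (hV : (0 < #|V|)%N) (hij : i != j)
    (c0 : config V k) (t : nat) (ht : (1 <= t)%N)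
    (hist : seq {ffun V -> V}) (hsz : size hist = t.-1) :
  let n : R := #|V|%:R in
  let c := run c0 hist in (* opn_{t-1} *)
  [/\ (forall eps : R, 0 <= eps <= 1 ->
        condE c (deltaE eps i j) =
        deltaE eps i j c * (alpha c i + alpha c j + 2 * (1 - beta c))
        + eps * alpha c i * alpha c j),
      (0 < beta (R:=R) c ->
        condE c (deltaE (0 : R) i j) =
        deltaE (0 : R) i j c *
          (1 + alpha c i + alpha c j - (gamma c + psi c) / beta c)),
      condVar c (deltaE (0 : R) i j) >=
        (1 - beta (R:=R) c) ^+ 2 / n * (alpha c i + alpha c j)
    & (forall eps : R, 0 <= eps <= 1 ->
        condBernstein c
          (fun c' => deltaE eps i j c' - condE c (deltaE eps i j))
          (2 * (1 + eps) / n)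
          (2 / n * (alpha c i + (1 + eps) ^+ 2 * alpha c j)))].
Proof.
move=> n c; split.
- by move=> eps _; exact: (@part1 R V k c i j hV hij eps).
- exact: (@part1b R V k c i j hV hij).
- exact: (@part2 R V k c i j hV hij).
- by move=> eps he; exact: (@part3 R V k c i j hV hij eps he).
Qed.
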